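(* Let $n$ be a positive integer that is a multiple of $3$. If the Aztec diamond $\operatorname{AD}(n)$ has a cover by L-trominoes, then $\operatorname{AD}(n+2)$ has a cover by L-trominoes.
   Context: A cell is a unit square $[i,i+1]\times[j,j+1]$ with $i,j\in\mathbb{Z}$. An L-tromino is a set of three cells equal to a $2\times 2$ block of cells with one cell removed. A cover of a region $R$ (a finite edge-connected set of cells) is a set of pairwise disjoint L-trominoes contained in $R$ whose union is $R$. The Aztec diamond $\operatorname{AD}(n)$ is the union of the cells $[a,a+1]\times[b,b+1]$, $a,b\in\mathbb{Z}$, lying completely inside $\{(x,y): |x|+|y|\le n+1\}$. *)

(* Defs.v *)
From Stdlib Require Import ZArith List Lia.
Open Scope Z_scope.

(* The cell [a,a+1] x [b,b+1] is represented by its lower-left corner (a,b). *)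
Definition cell := (Z * Z)%type.

Definition region := cell -> Prop.

Definition block (a b : Z) : region :=
  fun c => a <= fst c <= a + 1 /\ b <= snd c <= b + 1.

Definition is_L_tromino (T : region) : Prop :=
  exists a b i j : Z, (i = 0 \/ i = 1) /\ (j = 0 \/ j = 1) /\
    forall c, T c <-> (block a b c /\ c <> (a + i, b + j)).

(* The finite set is given as a list; pairwise
   disjointness is required for entries at distinct positions. *)
Definition cover (R : region) (F : list region) : Prop :=
  (forall T, In T F -> is_L_tromino T) /\
  (forall k l, (k < length F)%nat -> (l < length F)%nat -> k <> l ->
     forall c, ~ (nth k F (fun _ => False) c /\ nth l F (fun _ => False) c)) /\
  (forall T, In T F -> forall c, T c -> R c) /\
  (forall c, R c -> exists T, In T F /\ T c).

Definition has_cover (R : region) : Prop := exists F, cover R F.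

Definition in_diamond (n : nat) (x y : Z) : Prop :=
  Z.abs x + Z.abs y <= Z.of_nat n + 1.

(* Aztec diamond AD(n): cells lying completely inside {|x|+|y| <= n+1}.
   Since the region is convex, a unit square lies inside iff its four
   corners do. *)
Definition AD (n : nat) : region :=
  fun c => let (a, b) := c in
    in_diamond n a b /\ in_diamond n (a + 1) b /\
    in_diamond n a (b + 1) /\ in_diamond n (a + 1) (b + 1).

(* Main.v *)
Require Import Defs.
From Stdlib Require Import ZArith List Arith.
From Stdlib Require Import Lia Bool.
Open Scope Z_scope.

Definition fz (a:Z) : Z := if 0 <=? a then a+1 else -a.
Definition rz (a p i : Z) : Z*Z := if 0 <=? a then (p-1, i) else (-p-1, 1-i).
Definition owner_uv (N u v : Z) : Z*Z*Z*Z :=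
 if v mod 3 =? 1 then (N+2-v, v, 1, 1)
 else if v mod 3 =? 2 then (if u+v =? N+3 then (N+3-v, v-1, 1, 1) else (N+1-v, v, 0, 0))
 else (N+2-v, v-1, 0, 0).
Definition owner (N:Z) (c:Z*Z) : Z*Z*Z*Z :=
  let (a,b):=c in let '(p,q,i,j) := owner_uv N (fz a) (fz b) in
  let (A,I0) := rz a p i in let (B,J0) := rz b q j in (A,B,I0,J0).
Definition ringb (N:Z) (c:Z*Z) : bool :=
  let (a,b) := c in (fz a + fz b =? N+2) || (fz a + fz b =? N+3).
Definition inL (d:Z*Z*Z*Z) (c:Z*Z) : Prop :=
  let '(A,B,I0,J0) := d in (A <= fst c <= A+1 /\ B <= snd c <= B+1) /\ ~ (fst c = A+I0 /\ snd c = B+J0).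

Ltac crunch :=
  unfold owner, owner_uv, ringb, rz, fz, inL in *; simpl in *;
  repeat (match goal with
   | |- context [if ?x then _ else _] => let E := fresh "E" in destruct x eqn:E
   | H : context [if ?x then _ else _] |- _ => let E := fresh "E" in destruct x eqn:E
   | H : (_ || _)%bool = true |- _ => apply orb_true_iff in H
   | H : (_ <=? _) = true |- _ => apply Z.leb_le in H
   | H : (_ <=? _) = false |- _ => apply Z.leb_gt in H
   | H : (_ =? _) = true |- _ => apply Z.eqb_eq in H
   | H : (_ =? _) = false |- _ => apply Z.eqb_neq in H
   | H : context [(_ =? _) = true] |- _ => rewrite Z.eqb_eq in H
   end; simpl in *).

Lemma tup4 (a b c d e f g h : Z): a=e -> b=f -> c=g -> d=h -> (a,b,c,d)=(e,f,g,h).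
Proof. intros; subst; reflexivity. Qed.

Lemma ownerA N a b : N mod 3 = 0 -> 0 <= N -> ringb N (a,b) = true -> inL (owner N (a,b)) (a,b).
Proof. intros. crunch; lia. Qed.

Lemma ownerB1 N a b x y : N mod 3 = 0 -> 0 <= N -> ringb N (a,b) = true ->
  inL (owner N (a,b)) (x,y) -> ringb N (x,y) = true.
Proof. intros. crunch; rewrite ?orb_true_iff, ?Z.eqb_eq; Z.div_mod_to_equations; lia. Qed.

Lemma ownerB2 N a b x y : N mod 3 = 0 -> 0 <= N -> ringb N (a,b) = true ->
  inL (owner N (a,b)) (x,y) -> owner N (x,y) = owner N (a,b).
Proof. intros. crunch; apply tup4; Z.div_mod_to_equations; lia. Qed.

Lemma ownerC N c : let '(_,_,I0,J0) := owner N c in (I0 = 0 \/ I0 = 1) /\ (J0 = 0 \/ J0 = 1).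
Proof. destruct c as [a b]. crunch; lia. Qed.

Definition tile (d : Z*Z*Z*Z) : region :=
  fun c => let '(A,B,I0,J0) := d in block A B c /\ c <> (A+I0,B+J0).

Lemma tile_inL d c : tile d c <-> inL d c.
Proof.
  destruct d as [[[A B] I0] J0]; destruct c as [x y]; unfold tile, inL, block; simpl.
  split; intros [H1 H2]; split; auto.
  - intros [-> ->]; apply H2; reflexivity.
  - intros E; inversion E; subst; apply H2; split; reflexivity.
Qed.

Lemma AD_iff n a b : AD n (a,b) <-> fz a + fz b <= Z.of_nat n + 1.
Proof.
  unfold AD, in_diamond, fz.
  destruct (0 <=? a) eqn:Ea; destruct (0 <=? b) eqn:Eb;
  rewrite ?Z.leb_le, ?Z.leb_gt in *; split; intros; lia.
Qed.

Lemma ring_iff n a b : ringb (Z.of_nat n) (a,b) = true <-> AD (n+2) (a,b) /\ ~ AD n (a,b).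
Proof.
  rewrite !AD_iff. unfold ringb. rewrite orb_true_iff, !Z.eqb_eq.
  assert (1 <= fz a) by (unfold fz; destruct (0 <=? a) eqn:E; rewrite ?Z.leb_le, ?Z.leb_gt in *; lia).
  assert (1 <= fz b) by (unfold fz; destruct (0 <=? b) eqn:E; rewrite ?Z.leb_le, ?Z.leb_gt in *; lia).
  split; intros; lia.
Qed.

Definition zr (lo : Z) (k : nat) : list Z := map (fun i => lo + Z.of_nat i) (seq 0 k).

Lemma In_zr lo k x : lo <= x < lo + Z.of_nat k -> In x (zr lo k).
Proof.
  intros H. unfold zr. apply in_map_iff. exists (Z.to_nat (x - lo)). split.
  - lia.
  - apply in_seq. lia.
Qed.

Definition cells (N : Z) : list (Z*Z) :=
  let R := zr (-(N+5)) (Z.to_nat (2*N+11)) in list_prod R R.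

Lemma cells_complete N a b : 0 <= N -> ringb N (a,b) = true -> In (a,b) (cells N).
Proof.
  intros HN H. unfold cells. apply in_prod_iff.
  assert (HB: fz a + fz b = N+2 \/ fz a + fz b = N+3)
    by (unfold ringb in H; rewrite orb_true_iff, !Z.eqb_eq in H; exact H).
  unfold fz in HB.
  destruct (0 <=? a) eqn:Ea; destruct (0 <=? b) eqn:Eb;
  rewrite ?Z.leb_le, ?Z.leb_gt in *; split; apply In_zr; lia.
Qed.

Definition dec4 : forall x y : Z*Z*Z*Z, {x=y}+{x<>y}.
Proof. intros x y. repeat decide equality. Defined.

Definition Dlist (N : Z) : list (Z*Z*Z*Z) :=
  nodup dec4 (map (owner N) (filter (ringb N) (cells N))).

Lemma Dlist_in N d : In d (Dlist N) -> exists c, ringb N c = true /\ d = owner N c.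
Proof.
  unfold Dlist. rewrite nodup_In, in_map_iff. intros [c [E Hc]].
  apply filter_In in Hc. exists c. split; [tauto | auto].
Qed.

Lemma tile_mem N d c : N mod 3 = 0 -> 0 <= N -> In d (Dlist N) -> tile d c ->
  ringb N c = true /\ owner N c = d.
Proof.
  intros H3 HN Hd Ht. destruct (Dlist_in N d Hd) as [[a b] [Hr ->]].
  apply tile_inL in Ht. destruct c as [x y]. split.
  - eapply ownerB1; eauto.
  - eapply ownerB2; eauto.
Qed.

Lemma nth_map_tile j (G : list (Z*Z*Z*Z)) dflt d0 :
  (j < length G)%nat -> nth j (map tile G) dflt = tile (nth j G d0).
Proof.
  intros H. rewrite (nth_indep (map tile G) dflt (tile d0)) by (rewrite length_map; auto).
  apply map_nth.
Qed.

Theorem corollary2 (n : nat) (Hpos : (0 < n)%nat) (H3 : Nat.divide 3 n) :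
  has_cover (AD n) -> has_cover (AD (n + 2)).
Proof.
  intros [F0 [Ht [Hd [Hs Hc]]]].
  set (N := Z.of_nat n).
  assert (HN : 0 <= N) by lia.
  assert (HN3 : N mod 3 = 0).
  { destruct H3 as [k Hk]. unfold N. rewrite Hk, Nat2Z.inj_mul. apply Z_mod_mult. }
  set (dflt := fun _ : cell => False).
  exists (F0 ++ map tile (Dlist N)). split; [|split; [|split]].
  - intros T HT. apply in_app_or in HT. destruct HT as [HT|HT]; [auto|].
    apply in_map_iff in HT. destruct HT as [d [<- Hd']].
    destruct (Dlist_in N d Hd') as [c [_ ->]].
    pose proof (ownerC N c) as HC.
    destruct (owner N c) as [[[A B] I0] J0]. destruct HC as [HI HJ].
    exists A, B, I0, J0. split; [auto|split; [auto|]]. intros c'. unfold tile. tauto.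
  - intros k l Hk Hl Hkl c [H1 H2].
    rewrite length_app, length_map in Hk, Hl.
    pose proof (NoDup_nodup dec4 (map (owner N) (filter (ringb N) (cells N)))) as ND.
    fold (Dlist N) in ND.
    set (d0 := (0,0,0,0) : Z*Z*Z*Z).
    destruct (Nat.lt_ge_cases k (length F0)) as [Ek|Ek];
    destruct (Nat.lt_ge_cases l (length F0)) as [El|El].
    + rewrite app_nth1 in H1, H2 by auto. exact (Hd k l Ek El Hkl c (conj H1 H2)).
    + rewrite app_nth1 in H1 by auto. rewrite app_nth2 in H2 by auto.
      rewrite (nth_map_tile _ _ _ d0) in H2 by lia.
      apply (tile_mem N) in H2; auto; [|apply nth_In; lia].
      destruct c as [a b]. destruct H2 as [H2 _]. apply (ring_iff n) in H2. destruct H2 as [_ H2].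
      apply H2. eapply Hs; [apply nth_In; exact Ek| exact H1].
    + rewrite app_nth1 in H2 by auto. rewrite app_nth2 in H1 by auto.
      rewrite (nth_map_tile _ _ _ d0) in H1 by lia.
      apply (tile_mem N) in H1; auto; [|apply nth_In; lia].
      destruct c as [a b]. destruct H1 as [H1 _]. apply (ring_iff n) in H1. destruct H1 as [_ H1].
      apply H1. eapply Hs; [apply nth_In; exact El| exact H2].
    + rewrite app_nth2 in H1, H2 by auto.
      rewrite (nth_map_tile _ _ _ d0) in H1 by lia.
      rewrite (nth_map_tile _ _ _ d0) in H2 by lia.
      apply (tile_mem N) in H1; auto; [|apply nth_In; lia].
      apply (tile_mem N) in H2; auto; [|apply nth_In; lia].
      destruct H1 as [_ E1]. destruct H2 as [_ E2].
      rewrite E1 in E2.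
      rewrite (NoDup_nth _ d0) in ND.
      assert (k - length F0 = l - length F0)%nat by (apply ND; auto; lia).
      lia.
  - intros T HT c HTc. apply in_app_or in HT. destruct HT as [HT|HT].
    + pose proof (Hs T HT c HTc) as HA. destruct c as [a b].
      rewrite AD_iff in HA |- *. lia.
    + apply in_map_iff in HT. destruct HT as [d [<- Hd']].
      apply (tile_mem N) in HTc; auto. destruct HTc as [Hr _].
      destruct c as [a b]. apply (ring_iff n) in Hr. tauto.
  - intros [a b] HA.
    destruct (Z_le_gt_dec (fz a + fz b) (N+1)) as [Hle|Hgt].
    + assert (AD n (a,b)) by (apply AD_iff; exact Hle).
      destruct (Hc _ H) as [T [HT1 HT2]]. exists T. split; auto. apply in_or_app; auto.
    + assert (Hr : ringb N (a,b) = true).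
      { apply ring_iff. split; auto. rewrite AD_iff. lia. }
      exists (tile (owner N (a,b))). split.
      * apply in_or_app. right. apply in_map. unfold Dlist. apply nodup_In.
        apply in_map. apply filter_In. split; auto. apply cells_complete; auto.
      * apply tile_inL. apply ownerA; auto.
Qed.
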